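(* In the setting described in the context, if $\tau$ is the random slot allocation, then $\mathbb E\left[\sum_{k\in U}f_\tau(k)w_k\right]\ge(1-e^{-\delta})R$, where $R$ is the maximum total reward of a feasible service placement.
   Context: An SPSC instance: finite sets $S$ (services), $V$ (nodes), $U$ (users); sizes $s_i>0$; capacities $c_j>0$; for each user $k$ a service $i_k\in S$, a set $T_k\subseteq V$, a reward $w_k>0$. A service placement $X=\{X_i\subseteq V:i\in S\}$ is feasible iff $\sum_is_i\mathbf 1[j\in X_i]\le c_j$ for all $j$; its total reward is $\sum_kw_k\mathbf 1[T_k\cap X_{i_k}\ne\emptyset]$. Let $\{x_{ij}\},\{y_k\}$ be an optimal solution of the LP with nonnegative variables: maximize $\sum_ky_kw_k$ s.t. $y_k\le\sum_{j\in T_k}x_{i_kj}$, $y_k\le1$; $\sum_ix_{ij}s_i\le c_j$; $x_{ij}=0$ if $s_i>c_j$; $0\le x_{ij}\le1$. Fix $\beta<1$ with $\max_is_i\le\beta\min_jc_j$; $\gamma:=1-\sqrt\beta$, $\delta:=(1-\sqrt\beta)^2$, $\mathbb N=\{1,2,\dots\}$. For $j\in V,q\in\mathbb N$: $P_j^q:=\{i:\gamma^qc_j\beta<s_i\le\gamma^{q-1}c_j\beta\}$, $d_j^q:=\sum_{i\in P_j^q}x_{ij}$, $v_j:=\delta c_j/\sum_is_ix_{ij}$, $n_j^q:=\lceil v_jd_j^q\rceil$. Slot set $\Lambda$: for every $j,q$ with $P_j^q\ne\emptyset$, $n_j^q$ slots $\sigma$ with node $\nu(\sigma)=j$, class $\kappa(\sigma)=q$.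 A slot allocation is $\tau:\Lambda\to S$ with $\tau(\sigma)\in P^{\kappa(\sigma)}_{\nu(\sigma)}$; $X^\tau_i:=\{j:\exists\sigma,\nu(\sigma)=j,\tau(\sigma)=i\}$; $f_\tau(k):=\mathbf 1[T_k\cap X^\tau_{i_k}\ne\emptyset]$. The random slot allocation: for each slot $\sigma$ independently, $\tau(\sigma)=i$ with probability $x_{i\nu(\sigma)}/d^{\kappa(\sigma)}_{\nu(\sigma)}$ for $i\in P^{\kappa(\sigma)}_{\nu(\sigma)}$. *)

(* Defs.v *)
From HB Require Import structures.
From mathcomp Require Import all_boot all_order all_algebra.
From mathcomp Require Import boolp reals sequences exp.
From mathcomp Require classical_sets.
Set Implicit Arguments. Unset Strict Implicit. Unset Printing Implicit Defensive.
Import Order.TTheory GRing.Theory Num.Theory.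
Local Open Scope ring_scope.

Section SPSC.
Variables (R : realType) (S V U : finType).
Variables (s : S -> R) (c : V -> R) (ik : U -> S) (T : U -> {set V}) (w : U -> R).

Definition feasible_placement (X : {ffun S -> {set V}}) : bool :=
  [forall j : V, \sum_(i : S) s i * (j \in X i)%:R <= c j].

Definition placement_reward (X : {ffun S -> {set V}}) : R :=
  \sum_(k : U) w k * (T k :&: X (ik k) != set0)%:R.

(* R = maximum total reward of a feasible placement (empty placement is feasible) *)
Definition opt_reward : R :=
  \big[Num.max/0]_(X : {ffun S -> {set V}} | feasible_placement X) placement_reward X.

Definition lp_feasible (x : S -> V -> R) (y : U -> R) : Prop :=
  (forall i j, 0 <= x i j <= 1) /\
  (forall k, 0 <= y k) /\
  (forall k, y k <= \sum_(j in T k) x (ik k) j) /\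
  (forall k, y k <= 1) /\
  (forall j, \sum_(i : S) x i j * s i <= c j) /\
  (forall i j, c j < s i -> x i j = 0).

Definition lp_obj (y : U -> R) : R := \sum_(k : U) y k * w k.

Definition lp_optimal (x : S -> V -> R) (y : U -> R) : Prop :=
  lp_feasible x y /\ forall x' y', lp_feasible x' y' -> lp_obj y' <= lp_obj y.

Variables (x : S -> V -> R) (beta : R).

Definition gamma : R := 1 - Num.sqrt beta.
Definition delta : R := (1 - Num.sqrt beta) ^+ 2.

(* P_j^q (used for q >= 1) *)
Definition Pcls (j : V) (q : nat) (i : S) : bool :=
  (gamma ^+ q * c j * beta < s i) && (s i <= gamma ^+ q.-1 * c j * beta).

Definition dcls (j : V) (q : nat) : R := \sum_(i : S | Pcls j q i) x i j.

Definition vnode (j : V) : R := delta * c j / \sum_(i : S) s i * x i j.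

Definition ncls (j : V) (q : nat) : nat := absz (Num.ceil (vnode j * dcls j q)).

(* a bound on all classes q >= 1 with P_j^q nonempty (exists since s_i > 0) *)
Definition qbound : nat :=
  classical_sets.xget 0%N (fun M : nat => forall j q i, (1 <= q)%N -> Pcls j q i -> (q <= M)%N).

(* the slot set Lambda: for each j and each q >= 1 with P_j^q nonempty,
   n_j^q slots labelled (j, q) = (node, class) *)
Definition slot_list : seq (V * nat) :=
  flatten [seq flatten [seq nseq (ncls j q) (j, q)
                       | q <- iota 1 qbound & [exists i, Pcls j q i]]
          | j <- enum V].

Definition nslots : nat := size slot_list.
Definition slot_label (sg : 'I_nslots) : V * nat := tnth (in_tuple slot_list) sg.
Definition nu (sg : 'I_nslots) : V := (slot_label sg).1.
Definition kappa (sg : 'I_nslots) : nat := (slot_label sg).2.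

Definition slot_alloc := {ffun 'I_nslots -> S}.

(* f_tau(k) = 1[T_k meets X^tau_{i_k}] *)
Definition served (tau : slot_alloc) (k : U) : bool :=
  [exists sg : 'I_nslots, (nu sg \in T k) && (tau sg == ik k)].

(* random slot allocation: independent slots, tau(sg) = i w.p. x_{i nu}/d_nu^kappa *)
Definition slot_prob (sg : 'I_nslots) (i : S) : R :=
  if Pcls (nu sg) (kappa sg) i then x i (nu sg) / dcls (nu sg) (kappa sg) else 0.

Definition alloc_prob (tau : slot_alloc) : R := \prod_(sg : 'I_nslots) slot_prob sg (tau sg).

Definition expected_reward : R :=
  \sum_(tau : slot_alloc) alloc_prob tau * \sum_(k : U) (served tau k)%:R * w k.

End SPSC.

(* Main.v *)
Require Import Defs.
From HB Require Import structures.
From mathcomp Require Import all_boot all_order all_algebra.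
From mathcomp Require Import boolp reals sequences exp.
From mathcomp Require classical_sets.
From mathcomp Require Import convex interval_inference.
From mathcomp Require Import ring lra.
Import Order.TTheory GRing.Theory Num.Theory.
Local Open Scope ring_scope.

Lemma expcvx (R : realType) (t a b : R) : 0 <= t -> t <= 1 ->
  expR (t * a + (1 - t) * b) <= t * expR a + (1 - t) * expR b.
Proof.
move=> t0 t1.
have := @convex_expR R (Itv01 t0 t1) a b.
by rewrite !convRE /=.
Qed.

Lemma bernoulli_ineq (R : realType) (h : R) n : 0 <= h -> 1 + n%:R * h <= (1 + h) ^+ n.
Proof.
move=> h0; elim: n => [|n IH]; first by rewrite mul0r addr0 expr0.
rewrite exprS -natr1 mulrDl mul1r.
have e1 : 0 <= 1 + h by rewrite addr_ge0.
have : (1 + h) * (1 + n%:R * h) <= (1 + h) * (1 + h) ^+ n by rewrite ler_wpM2l.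
apply: le_trans.
have : 0 <= n%:R * h * h by rewrite !mulr_ge0.
nra.
Qed.

Lemma geo_small (R : realType) (g A B : R) : 0 < g -> g < 1 -> 0 < B ->
  exists N : nat, g ^+ N * A < B.
Proof.
move=> g0 g1 B0.
set h := g^-1 - 1.
have h0 : 0 < h by rewrite /h subr_gt0 invf_gt1.
have ab : 0 <= `|A| / (B * h) by rewrite divr_ge0 // mulr_ge0 // ltW.
have := archi_boundP ab; set N := Num.bound _ => HN.
exists N.
have gN0 : 0 < g ^+ N by rewrite exprn_gt0.
have hN := @bernoulli_ineq R h N (ltW h0).
have e : 1 + h = g^-1 by rewrite /h addrC subrK.
rewrite e exprVn in hN.
have HN' : `|A| < N%:R * (B * h).
  by rewrite -ltr_pdivrMr ?mulr_gt0.
have : A <= `|A| by exact: ler_norm.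
have : g ^+ N * (g ^+ N)^-1 = 1 by rewrite mulfV // gt_eqF.
move: hN HN'; set u := (g ^+ N)^-1; set v := g ^+ N => hN HN' vu Aabs.
have : A < B * u.
  apply: le_lt_trans Aabs _; apply: lt_le_trans HN' _.
  have : 0 <= N%:R by [].
  nra.
move=> AB; have : v * A < v * (B * u) by rewrite ltr_pM2l.
by rewrite mulrCA vu mulr1.
Qed.

Section Pf.
Variables (R : realType) (S V U : finType) (s : S -> R) (c : V -> R) (ik : U -> S)
  (T : U -> {set V}) (w : U -> R) (x : S -> V -> R) (y : U -> R) (beta : R).
Hypothesis s0 : forall i, 0 < s i.
Hypothesis c0 : forall j, 0 < c j.
Hypothesis w0 : forall k, 0 < w k.
Hypothesis b1 : beta < 1.
Hypothesis sb : forall i j, s i <= beta * c j.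
Hypothesis opt : lp_optimal s c ik T w x y.

Local Notation P := (Pcls s c beta).
Local Notation d := (dcls s c x beta).
Local Notation nc := (ncls s c x beta).
Local Notation gam := (gamma beta).
Local Notation del := (delta beta).
Local Notation qb := (qbound s c beta).

Lemma xge0 i j : 0 <= x i j.
Proof. by case: opt => [[/(_ i j) /andP[]]]. Qed.
Lemma xle1 i j : x i j <= 1.
Proof. by case: opt => [[/(_ i j) /andP[]]]. Qed.
Lemma capj j : \sum_i s i * x i j <= c j.
Proof.
case: opt => [[_ [_ [_ [_ [H _]]]]] _].
by apply: le_trans (H j); rewrite le_eqVlt; apply/orP; left; apply/eqP; apply: eq_bigr => i _; rewrite mulrC.
Qed.
Lemma yle k : y k <= \sum_(j in T k) x (ik k) j.
Proof. by case: opt => [[_ [_ [H _]]] _]. Qed.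
Lemma yle1 k : y k <= 1.
Proof. by case: opt => [[_ [_ [_ [H _]]]] _]. Qed.
Lemma yge0 k : 0 <= y k.
Proof. by case: opt => [[_ [H _]] _]. Qed.

Lemma sqb1 : Num.sqrt beta < 1.
Proof. by rewrite -sqrtr1 ltr_sqrt ?ltr01. Qed.
Lemma gam_gt0 : 0 < gam.
Proof. by rewrite /gamma subr_gt0 sqb1. Qed.
Lemma gam_le1 : gam <= 1.
Proof. by rewrite /gamma lerBlDr lerDl sqrtr_ge0. Qed.
Lemma del_ge0 : 0 <= del.
Proof. by rewrite /delta exprn_ge0 // ltW // gam_gt0. Qed.
Lemma del_le1 : del <= 1.
Proof. by rewrite /delta exprn_ile1 // ?gam_le1 // ltW // gam_gt0. Qed.
Lemma beta_gt0 (i : S) (j : V) : 0 < beta.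
Proof. have := sb i j; have := s0 i; have := c0 j; nra. Qed.
Lemma gam_lt1 (i : S) (j : V) : gam < 1.
Proof. by rewrite /gamma ltrBlDr ltrDl sqrtr_gt0 (beta_gt0 i j). Qed.

Lemma class_bound j i : exists N, forall q, P j q i -> (q <= N)%N.
Proof.
have [N HN] := @geo_small _ gam (c j * beta) (s i) gam_gt0 (gam_lt1 i j) (s0 i).
exists N => q /andP[_ H2].
rewrite leqNgt; apply/negP => Nq.
have : gam ^+ q.-1 <= gam ^+ N.
  by apply: ler_wiXn2l; [exact: ltW gam_gt0| exact: gam_le1| rewrite -ltnS prednK // (leq_ltn_trans _ Nq)].
move=> le; have : gam ^+ q.-1 * c j * beta <= gam ^+ N * c j * beta.
  by rewrite ler_wpM2r ?ler_wpM2r // ltW // ?c0 // (beta_gt0 i j).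
rewrite -!mulrA => le2; rewrite -mulrA in H2.
have := lt_le_trans (le_lt_trans H2 (le_lt_trans le2 HN)) (lexx (s i)).
by rewrite ltxx.
Qed.

Lemma qbound_prop : forall j q i, (1 <= q)%N -> P j q i -> (q <= qb)%N.
Proof.
rewrite /qbound.
suff H : exists M : nat, (fun M : nat => forall j q i, (1 <= q)%N -> P j q i -> (q <= M)%N) M.
  exact: (classical_sets.xgetPex 0%N H).
have [f Hf] := @fin_all_exists _ (fun _ => nat) (fun p n => forall q, P p.1 q p.2 -> (q <= n)%N)
  (fun p => class_bound p.1 p.2).
exists (\max_p f p) => j q i _ Pq.
by apply: leq_trans (Hf (j, i) q Pq) (leq_bigmax (j, i)).
Qed.

Lemma ex_class j i : exists q, [/\ (0 < q)%N, (q <= qb)%N & P j q i].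
Proof.
have [N HN] := @geo_small _ gam (c j * beta) (s i) gam_gt0 (gam_lt1 i j) (s0 i).
have ex : exists n, gam ^+ n * c j * beta < s i by exists N; rewrite -mulrA.
case: (ex_minnP ex) => q Hq Hmin.
have q0 : (0 < q)%N.
  rewrite lt0n; apply/negP => /eqP q0; move: Hq; rewrite q0 expr0 mul1r mulrC.
  by rewrite ltNge sb.
have Pq : P j q i.
  rewrite /Pcls Hq /=; rewrite leNgt; apply/negP => H.
  by have := Hmin _ H; rewrite -ltnS prednK // ltnn.
exists q; split => //; exact: (qbound_prop j q i q0 Pq).
Qed.

Local Notation sl := (slot_list s c x beta).
Local Notation ns := (nslots s c x beta).
Local Notation vn := (vnode s c x beta).

Lemma mem_slot l : l \in sl -> (0 < nc l.1 l.2)%N.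
Proof.
case/flatten_mapP => j _ /flatten_mapP [q _].
by rewrite mem_nseq => /andP[H /eqP ->].
Qed.

Lemma dge0 j q : 0 <= d j q.
Proof. by rewrite /dcls; apply: sumr_ge0 => i _; apply: xge0. Qed.

Lemma vn_ge0 j : 0 <= vn j.
Proof.
rewrite /vnode divr_ge0 //; first by rewrite mulr_ge0 ?del_ge0 // ltW.
by apply: sumr_ge0 => i _; rewrite mulr_ge0 ?xge0 // ltW.
Qed.

Lemma nc_pos_d j q : (0 < nc j q)%N -> d j q != 0.
Proof.
rewrite /ncls; apply: contraTneq => ->; rewrite mulr0.
have -> : Num.ceil (0 : R) = 0.
  by apply/eqP; rewrite eq_le ceil_le0 lexx ceil_ge0 ltrN10.
by [].
Qed.

Lemma slot_d (sg : 'I_ns) : d (nu sg) (kappa sg) != 0.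
Proof.
apply: nc_pos_d; apply: (@mem_slot (slot_label sg)).
exact: mem_tnth.
Qed.

Lemma sp_ge0 (sg : 'I_ns) i : 0 <= slot_prob sg i.
Proof.
rewrite /slot_prob; case: ifP => // _.
by rewrite divr_ge0 ?xge0 ?dge0.
Qed.

Lemma sp_sum (sg : 'I_ns) : \sum_i slot_prob sg i = 1.
Proof.
rewrite /slot_prob -big_mkcond /= -mulr_suml.
by rewrite divff // slot_d.
Qed.

Lemma prod_ind (I : finType) (b : I -> bool) : \prod_i ((b i)%:R : R) = ([forall i, b i])%:R.
Proof.
case: (boolP [forall i, b i]) => [/forallP H| /forallPn [i Hi]].
  by apply: big1 => i _; rewrite H.
by rewrite (bigD1 i) //= (negbTE Hi) mul0r.
Qed.

Section K.
Variable k : U.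
Let bad (sg : 'I_ns) i := (nu sg \in T k) && (i == ik k).
Let a (sg : 'I_ns) := (nu sg \in T k)%:R * slot_prob sg (ik k).

Lemma sum_good sg : \sum_i slot_prob sg i * (~~ bad sg i)%:R = 1 - a sg.
Proof.
rewrite /bad /a; case: (nu sg \in T k) => /=.
  have := sp_sum sg; rewrite (bigD1 (ik k)) //= => H.
  rewrite (bigD1 (ik k)) //= eqxx mulr0 add0r mul1r.
  have -> : \sum_(i | i != ik k) slot_prob sg i * (~~ (i == ik k))%:R
     = \sum_(i | i != ik k) slot_prob sg i.
    by apply: eq_bigr => i /negbTE ->; rewrite mulr1.
  by rewrite -H addrC addrK.
rewrite mul0r subr0; transitivity (\sum_i slot_prob sg i); last exact: sp_sum.
by apply: eq_bigr => i _; rewrite mulr1.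
Qed.

Lemma alloc_sum : \sum_(tau : slot_alloc s c x beta) alloc_prob tau = 1.
Proof.
rewrite /alloc_prob -bigA_distr_bigA.
by apply: big1 => sg _; rewrite sp_sum.
Qed.

Lemma prob_notserved :
  \sum_(tau : slot_alloc s c x beta) alloc_prob tau * (~~ served ik T tau k)%:R
  = \prod_sg (1 - a sg).
Proof.
under eq_bigr => sg _ do rewrite -sum_good.
rewrite bigA_distr_bigA; apply: eq_bigr => tau _.
rewrite big_split /= prod_ind /alloc_prob /served negb_exists.
by [].
Qed.

Lemma prob_served :
  \sum_(tau : slot_alloc s c x beta) alloc_prob tau * (served ik T tau k)%:R
  = 1 - \prod_sg (1 - a sg).
Proof.
rewrite -prob_notserved -[X in X - _]alloc_sum -sumrB; apply: eq_bigr => tau _.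
by case: (served _ _ _ _); rewrite /= ?mulr1 ?mulr0 ?subr0 ?subrr.
Qed.


Let F (l : V * nat) := (l.1 \in T k)%:R *
   (if P l.1 l.2 (ik k) then x (ik k) l.1 / d l.1 l.2 else 0).

Lemma a_F sg : a sg = F (slot_label sg).
Proof. by []. Qed.

Lemma iter_add (z : R) n : iter n (+%R z) 0 = z *+ n.
Proof. by elim: n => //= n ->; rewrite mulrS. Qed.

Lemma sum_a : \sum_sg a sg =
  \sum_(j <- enum V) \sum_(q <- iota 1 qb | [exists i, P j q i]) F (j, q) *+ nc j q.
Proof.
transitivity (\sum_(l <- sl) F l).
  by rewrite [RHS]big_tnth.
rewrite /slot_list big_flatten big_map; apply: eq_bigr => j _.
rewrite big_flatten big_map big_filter; apply: eq_bigr => q _.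
by rewrite big_nseq iter_add.
Qed.

Lemma F_ge0 l : 0 <= F l.
Proof.
rewrite /F mulr_ge0 //; case: ifP => // _.
by rewrite divr_ge0 ?xge0 ?dge0.
Qed.

Lemma per_j j : del * ((j \in T k)%:R * x (ik k) j) <=
  \sum_(q <- iota 1 qb | [exists i, P j q i]) F (j, q) *+ nc j q.
Proof.
have Fge0 : forall q, 0 <= F (j, q) *+ nc j q by move=> q; rewrite mulrn_wge0 ?F_ge0.
case jT: (j \in T k); last by rewrite mul0r mulr0; apply: sumr_ge0.
case: (eqVneq (x (ik k) j) 0) => [->|xnz]; first by rewrite !mulr0; apply: sumr_ge0.
have xpos : 0 < x (ik k) j by rewrite lt_def xnz xge0.
have [q [q0 qq Pq]] := ex_class j (ik k).
rewrite -big_filter (bigD1_seq q) /=; last first.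
- by rewrite filter_uniq // iota_uniq.
- rewrite mem_filter mem_iota q0 /= add1n ltnS qq andbT.
  by apply/existsP; exists (ik k).
rewrite -[X in X <= _]addr0; apply: lerD; last first.
  by rewrite big_filter_cond; apply: sumr_ge0.
rewrite /F /= jT Pq /= !mul1r -mulr_natr.
have dpos : 0 < d j q.
  apply: lt_le_trans xpos _; rewrite /dcls (bigD1 (ik k)) //= lerDl.
  by apply: sumr_ge0 => i _; apply: xge0.
have Spos : 0 < \sum_i s i * x i j.
  apply: lt_le_trans (_ : s (ik k) * x (ik k) j <= _); first by rewrite mulr_gt0.
  rewrite (bigD1 (ik k)) //= lerDl.
  by apply: sumr_ge0 => i _; rewrite mulr_ge0 ?xge0 // ltW.
have vdel : del <= vn j.
  rewrite /vnode ler_pdivlMr //; apply: ler_wpM2l; [exact: del_ge0 | exact: capj].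
have hceil : vn j * d j q <= (nc j q)%:R.
  rewrite /ncls natr_absz ger0_norm ?ceil_ge // ceil_ge0.
  have := mulr_ge0 (vn_ge0 j) (dge0 j q); lra.
apply: le_trans (_ : x (ik k) j / d j q * (vn j * d j q) <= _); last first.
  by rewrite ler_wpM2l // divr_ge0 ?xge0 ?dge0.
have -> : x (ik k) j / d j q * (vn j * d j q) = x (ik k) j * vn j.
  by field; rewrite gt_eqF.
by rewrite mulrC ler_wpM2l // xge0.
Qed.

Lemma sum_a_ge : del * \sum_(j in T k) x (ik k) j <= \sum_sg a sg.
Proof.
rewrite sum_a big_mkcond /= mulr_sumr enumT.
apply: ler_sum => j _; apply: le_trans (per_j j).
by case: (j \in T k); rewrite ?mul1r ?mul0r.
Qed.


Lemma a_range sg : 0 <= a sg <= 1.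
Proof.
have p1 : slot_prob sg (ik k) <= 1.
  rewrite -(sp_sum sg) (bigD1 (ik k)) //= lerDl.
  by apply: sumr_ge0 => i _; apply: sp_ge0.
rewrite /a; case: (nu sg \in T k); rewrite ?mul1r ?mul0r ?lexx ?ler01 ?sp_ge0 //.
Qed.

Lemma prod_le : \prod_sg (1 - a sg) <= expR (- \sum_sg a sg).
Proof.
rewrite -sumrN expR_sum; apply: ler_prod => sg _.
have /andP[h0 h1] := a_range sg.
by rewrite subr_ge0 h1 /= expR_ge1Dx.
Qed.

Lemma served_ge : (1 - expR (- del)) * y k <=
  \sum_(tau : slot_alloc s c x beta) alloc_prob tau * (served ik T tau k)%:R.
Proof.
rewrite prob_served.
have h1 : del * y k <= \sum_sg a sg.
  apply: le_trans (sum_a_ge); apply: ler_wpM2l; [exact: del_ge0 | exact: yle].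
have h2 : expR (- \sum_sg a sg) <= expR (- (del * y k)) by rewrite ler_expR lerN2.
have h3 : expR (y k * (- del) + (1 - y k) * 0) <= y k * expR (- del) + (1 - y k) * expR 0.
  by apply: expcvx; [exact: yge0 | exact: yle1].
rewrite mulr0 addr0 expR0 mulr1 mulrN in h3.
have h4 := prod_le.
rewrite mulrC in h2.
lra.
Qed.

End K.

Lemma opt_le_lp : opt_reward s c ik T w <= lp_obj w y.
Proof.
rewrite /opt_reward; elim/big_ind: _ => [| a1 a2 h1 h2 | X feas].
- by apply: sumr_ge0 => k _; rewrite mulr_ge0 ?yge0 // ltW.
- by rewrite ge_max h1 h2.
pose x' := fun i j => ((j \in X i)%:R : R).
pose y' := fun k => ((T k :&: X (ik k) != set0)%:R : R).
have feasX : forall j, \sum_i s i * (j \in X i)%:R <= c j by move/forallP: feas.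
have lpf : lp_feasible s c ik T x' y'.
  split; first by move=> i j; rewrite /x'; case: (j \in X i); rewrite ?lexx ?ler01.
  split; first by move=> k; rewrite /y' ler0n.
  split.
    move=> k; rewrite /y'; case: (boolP (T k :&: X (ik k) != set0)) => [/set0Pn [j]|_].
      rewrite inE => /andP[jT jX]; rewrite (bigD1 j) //= /x' jX /=.
      by rewrite lerDl sumr_ge0 // => i _; rewrite ler0n.
    by rewrite sumr_ge0 // => i _; rewrite ler0n.
  split; first by move=> k; rewrite /y'; case: (_ != _); rewrite ?lexx ?ler01.
  split.
    move=> j; apply: le_trans (feasX j); rewrite le_eqVlt; apply/orP; left; apply/eqP.
    by apply: eq_bigr => i _; rewrite mulrC.
  move=> i j cs; rewrite /x'; case jX: (j \in X i) => //.
  have : s i <= c j.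
    apply: le_trans (feasX j); rewrite (bigD1 i) //= jX mulr1 lerDl.
    by apply: sumr_ge0 => i' _; rewrite mulr_ge0 ?ler0n // ltW.
  by rewrite leNgt cs.
have := (proj2 opt) x' y' lpf.
apply: le_trans; rewrite /placement_reward /lp_obj le_eqVlt; apply/orP; left; apply/eqP.
by apply: eq_bigr => k _; rewrite mulrC.
Qed.

Lemma main : (1 - expR (- del)) * opt_reward s c ik T w <= expected_reward s c ik T w x beta.
Proof.
have e1 : expR (- del) <= 1.
  by rewrite -expR0 ler_expR oppr_le0 del_ge0.
apply: le_trans (_ : (1 - expR (- del)) * lp_obj w y <= _).
  by apply: ler_wpM2l; [rewrite subr_ge0 | exact: opt_le_lp].
rewrite /lp_obj mulr_sumr /expected_reward.
have -> : \sum_(tau : slot_alloc s c x beta) alloc_prob tau * \sum_k (served ik T tau k)%:R * w k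
  = \sum_k w k * \sum_(tau : slot_alloc s c x beta) alloc_prob tau * (served ik T tau k)%:R.
  under eq_bigr do rewrite mulr_sumr.
  rewrite exchange_big; apply: eq_bigr => k _; rewrite mulr_sumr; apply: eq_bigr => tau _.
  by rewrite mulrA mulrC.
apply: ler_sum => k _.
rewrite mulrA [X in X <= _]mulrC; apply: ler_wpM2l; first exact: ltW.
exact: served_ge.
Qed.

End Pf.

Theorem theorem5 (R : realType) (S V U : finType)
    (s : S -> R) (c : V -> R) (ik : U -> S) (T : U -> {set V}) (w : U -> R)
    (x : S -> V -> R) (y : U -> R) (beta : R) :
  (forall i, 0 < s i) ->
  (forall j, 0 < c j) ->
  (forall k, 0 < w k) ->
  beta < 1 ->
  (forall i j, s i <= beta * c j) ->
  lp_optimal s c ik T w x y ->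
  (1 - expR (- delta beta)) * opt_reward s c ik T w
    <= expected_reward s c ik T w x beta.
Proof.
move=> h1 h2 h3 h4 h5 h6.
exact: (@main R S V U s c ik T w x y beta h1 h2 h3 h4 h5 h6).
Qed.
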